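(* For any simplicial model $\mathcal{C}=(\mathcal{V},C,\chi,\ell)$, $\mathtt{LEM}(\mathcal{C})$ is a proper local epistemic model such that for every facet $F\in\mathcal{F}(C)$ and every sentence $\alpha$, $\mathcal{C},F\Vdash\alpha$ iff $\mathtt{LEM}(\mathcal{C}),F\vDash\alpha$. For any local epistemic model $\mathcal{M}=(W,\delta,\{R_a\}_{a\in\mathbf{A}},\rho)$, $\mathtt{SC}(\mathcal{M})$ is a simplicial model whose set of facets is $\{F^{\mathcal M}_w\mid w\in W\}$, and for every $w\in W$ and every sentence $\alpha$, $\mathcal{M},w\vDash\alpha$ iff $\mathtt{SC}(\mathcal{M}),F^{\mathcal M}_w\Vdash\alpha$.
   Context: Fix a nonempty finite set $\mathbf{A}$ of agents, a countable set $\mathbf{X}$ of variables disjoint from $\mathbf{A}$, and a countable set $\mathbf{P}$ of predicate letters. Formulas of $\mathcal{L}$: $\phi ::= p_x \mid \top \mid \neg\phi \mid (\phi\wedge\phi) \mid [x:=a]\phi \mid \mathsf{K}_X\alpha$ ($p\in\mathbf{P}$, $x\in\mathbf{X}$, $a\in\mathbf{A}$, $X\subseteq\mathbf{X}$ finite possibly empty, $\alpha$ without free variables), with $FV(p_x)=\{x\}$, $FV(\top)=\emptyset$, $FV$ of $\neg,\wedge$ as usual, $FV([x:=a]\phi)=FV(\phi)\setminus\{x\}$, $FV(\mathsf{K}_X\alpha)=X$; sentences have no free variables. A simplicial model is $\mathcal{C}=(\mathcal{V},C,\chi,\ell)$: $\mathcal{V}\neq\emptyset$; $C\subseteq\wp(\mathcal{V})$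 with $\emptyset\notin C$, closed under nonempty subsets, containing all singletons; $\chi:\mathcal{V}\to\mathbf{A}$ injective on every member of $C$; $\ell:\mathbf{P}\to\wp(\mathcal{V})$; facets $\mathcal{F}(C)$ are the inclusion-maximal members of $C$. A first-order Kripke model is $\mathcal{M}=(W,\delta,\{R_a\}_{a\in\mathbf{A}},\rho)$: $W\neq\emptyset$, $\delta:W\to\wp(\mathbf{A})\setminus\{\emptyset\}$, $R_a\subseteq W\times W$ with $R_a(w)=\emptyset$ if $a\notin\delta(w)$, $\rho:\mathbf{P}\times W\to\wp(\mathbf{A})$ with $\rho(p,w)\subseteq\delta(w)$. Semantics, with assignments $\sigma:\mathbf{X}\to\mathbf{A}$ admissible ($\sigma[FV(\phi)]\subseteq\chi[F]$, resp. $\subseteq\delta(w)$), Booleans standard: $\mathcal{C},F,\sigma\Vdash p_x$ iff $\sigma(x)\in\chi[F\cap\ell(p)]$; $\mathcal{C},F,\sigma\Vdash[x:=a]\phi$ iff ($a\in\chi[F]$ implies $\mathcal{C},F,\sigma[x\mapsto a]\Vdash\phi$); $\mathcal{C},F,\sigma\Vdash\mathsf{K}_X\alpha$ iff $\mathcal{C},G,\sigma\Vdash\alpha$ for all $G\in\mathcal{F}(C)$ with $\sigma[X]\subseteq\chi[F\cap G]$. $\mathcal{M},w,\sigma\vDash p_x$ iff $\sigma(x)\in\rho(p,w)$; $\mathcal{M},w,\sigma\vDash[x:=a]\phi$ iff ($a\in\delta(w)$ implies $\mathcal{M},w,\sigma[x\mapsto a]\vDash\phi$); $\mathcal{M},w,\sigma\vDash\mathsf{K}_X\alpha$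 iff $\mathcal{M},v,\sigma\vDash\alpha$ for all $v\in\bigcap_{a\in\sigma[X]}R_a(w)$ (empty intersection $=W$). Truth of sentences does not depend on the assignment. $\mathcal{M}$ is a local epistemic model if: for each $a$ the restriction of $R_a$ to $\{w\mid a\in\delta(w)\}$ is an equivalence relation; $wR_av$ and $a\in\delta(w)$ imply $a\in\delta(v)$; $wR_av$ and $a\in\rho(p,w)$ imply $a\in\rho(p,v)$; $v\in\bigcap_{a\in\delta(w)}R_a(w)$ implies $\delta(v)\subseteq\delta(w)$. It is proper if additionally $\bigcap_{a\in\delta(w)}R_a(w)=\{w\}$ for all $w$. $\mathtt{LEM}(\mathcal{C})=(W^{\mathcal C},\delta^{\mathcal C},\{R^{\mathcal C}_a\},\rho^{\mathcal C})$ where $W^{\mathcal C}=\mathcal{F}(C)$, $\delta^{\mathcal C}(F)=\chi[F]$, $R^{\mathcal C}_a=\{(F,G)\mid a\in\chi[F\cap G]\}$, $\rho^{\mathcal C}(p,F)=\chi[F\cap\ell(p)]$. For a local epistemic model $\mathcal{M}$, let $[w]_a=R_a(w)$ and $F^{\mathcal M}_w=\{(a,[w]_a)\mid a\in\delta(w)\}$; $\mathtt{SC}(\mathcal{M})=(\mathcal{V}^{\mathcal M},C^{\mathcal M},\chi^{\mathcal M},\ell^{\mathcal M})$ where $\mathcal{V}^{\mathcal M}=\{(a,[w]_a)\mid w\in W, a\in\delta(w)\}$, $C^{\mathcal M}=\{X\subseteq\mathcal{V}^{\mathcal M}\mid X\neq\emptyset, X\subseteq F^{\mathcal M}_w\text{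 for some }w\in W\}$, $\chi^{\mathcal M}(a,[w]_a)=a$, and $\ell^{\mathcal M}(p)=\{(a,[w]_a)\mid a\in\rho(p,w)\}$. *)

(* Defs.v *)
From mathcomp Require Import all_boot.
Set Implicit Arguments. Unset Strict Implicit. Unset Printing Implicit Defensive.

Section Syntax.
Variables (A : finType) (X : countType) (P : countType).

(** Formulas of L.  K xs alpha : xs is a finite (possibly empty) set of variables. *)
Inductive form : Type :=
| FPred of P & X
| FTop
| FNeg of form
| FAnd of form & form
| FAssign of X & A & form
| FK of seq X & form.

Fixpoint fv (f : form) (y : X) : Prop :=
  match f with
  | FPred _ x => y = x
  | FTop => False
  | FNeg g => fv g y
  | FAnd g h => fv g y \/ fv h y
  | FAssign x _ g => fv g y /\ y <> x
  | FK xs _ => y \in xs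
  end.

Definition closedf (f : form) : Prop := forall y, ~ fv f y.

Fixpoint wf (f : form) : Prop :=
  match f with
  | FPred _ _ | FTop => True
  | FNeg g => wf g
  | FAnd g h => wf g /\ wf h
  | FAssign _ _ g => wf g
  | FK _ g => wf g /\ closedf g
  end.

Definition sentence (f : form) : Prop := wf f /\ closedf f.

Definition upd (s : X -> A) (x : X) (a : A) : X -> A :=
  fun y => if y == x then a else s y.

Definition img (V : Type) (chi : V -> A) (F : V -> Prop) : A -> Prop :=
  fun a => exists v, F v /\ chi v = a.

Section Simplicial.
Variables (V : Type) (C : (V -> Prop) -> Prop) (chi : V -> A) (lab : P -> V -> Prop).

Definition is_simplicial_model : Prop :=
  [/\ (exists v : V, True),
      (forall F, C F -> exists v, F v),
      (forall F G, C F -> (forall v, G v -> F v) -> (exists v, G v) -> C G),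
      (forall v, C (fun u => u = v)) &
      (forall F u v, C F -> F u -> F v -> chi u = chi v -> u = v)].

Definition facet (F : V -> Prop) : Prop :=
  C F /\ forall G, C G -> (forall v, F v -> G v) -> forall v, G v -> F v.

Fixpoint ssat (F : V -> Prop) (s : X -> A) (f : form) : Prop :=
  match f with
  | FPred p x => img chi (fun v => F v /\ lab p v) (s x)
  | FTop => True
  | FNeg g => ~ ssat F s g
  | FAnd g h => ssat F s g /\ ssat F s h
  | FAssign x a g => img chi F a -> ssat F (upd s x a) g
  | FK xs g => forall G, facet G ->
       (forall y, y \in xs -> img chi (fun v => F v /\ G v) (s y)) -> ssat G s g
  end.

(** truth of a sentence at F (does not depend on the assignment) *)
Definition ssat_sent (F : V -> Prop) (f : form) : Prop := forall s, ssat F s f.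
End Simplicial.

Section Kripke.
Variables (W : Type) (delta : W -> A -> Prop) (R : A -> W -> W -> Prop)
          (rho : P -> W -> A -> Prop).

Definition is_kripke_model : Prop :=
  [/\ (exists w : W, True),
      (forall w, exists a, delta w a),
      (forall a w v, R a w v -> delta w a) &
      (forall p w a, rho p w a -> delta w a)].

Definition is_local_epistemic : Prop :=
  [/\ is_kripke_model,
      (forall a, [/\ (forall w, delta w a -> R a w w),
                     (forall w v, delta w a -> delta v a -> R a w v -> R a v w) &
                     (forall w v u, delta w a -> delta v a -> delta u a ->
                                    R a w v -> R a v u -> R a w u)]),
      (forall a w v, R a w v -> delta w a -> delta v a),
      (forall a p w v, R a w v -> rho p w a -> rho p v a) &
      (forall w v, (forall a, delta w a -> R a w v) -> forall a, delta v a -> delta w a)].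

Definition is_proper : Prop :=
  forall w v, (forall a, delta w a -> R a w v) <-> v = w.

Fixpoint ksat (w : W) (s : X -> A) (f : form) : Prop :=
  match f with
  | FPred p x => rho p w (s x)
  | FTop => True
  | FNeg g => ~ ksat w s g
  | FAnd g h => ksat w s g /\ ksat w s h
  | FAssign x a g => delta w a -> ksat w (upd s x a) g
  | FK xs g => forall v, (forall y, y \in xs -> R (s y) w v) -> ksat v s g
  end.

Definition ksat_sent (w : W) (f : form) : Prop := forall s, ksat w s f.

Definition SCV : Type :=
  {p : A * (W -> Prop) | exists w, delta w p.1 /\ p.2 = R p.1 w}.

Definition SCfacet (w : W) : SCV -> Prop :=
  fun u => delta w (sval u).1 /\ (sval u).2 = R (sval u).1 w.

Definition SCC (S : SCV -> Prop) : Prop :=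
  (exists u, S u) /\ exists w, forall u, S u -> SCfacet w u.

Definition SCchi (u : SCV) : A := (sval u).1.

Definition SClab (p : P) (u : SCV) : Prop :=
  exists w, delta w (sval u).1 /\ (sval u).2 = R (sval u).1 w /\ rho p w (sval u).1.
End Kripke.

Section LEM.
Variables (V : Type) (C : (V -> Prop) -> Prop) (chi : V -> A) (lab : P -> V -> Prop).

Definition LEMW : Type := {F : V -> Prop | facet C F}.
Definition LEMdelta (F : LEMW) : A -> Prop := img chi (sval F).
Definition LEMR (a : A) (F G : LEMW) : Prop :=
  img chi (fun v => sval F v /\ sval G v) a.
Definition LEMrho (p : P) (F : LEMW) : A -> Prop :=
  img chi (fun v => sval F v /\ lab p v).
End LEM.

End Syntax.

(* Main.v *)
Require Import Defs.
From mathcomp Require Import all_boot.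
From mathcomp Require Import boolp zify.
From Stdlib Require Import Classical.
Set Implicit Arguments. Unset Strict Implicit.

Lemma sig_eq (T : Type) (Q : T -> Prop) (x y : {t | Q t}) : sval x = sval y -> x = y.
Proof. case: x; case: y => /= a qa b qb eab; subst; congr exist; apply: Prop_irrelevance. Qed.

Lemma truth1 (A : finType) (X P : countType) (V : Type) (C : (V -> Prop) -> Prop)
  (chi : V -> A) (lab : P -> V -> Prop) (f : form A X P) :
  forall (F : LEMW C) s, ssat C chi lab (sval F) s f <->
     ksat (@LEMdelta A V C chi) (@LEMR A V C chi) (@LEMrho A P V C chi lab) F s f.
Proof.
elim: f => [p x|| g IH | g IHg h IHh | x a g IH | xs g IH] F s /=.
- by [].
- by [].
- by split => H1 H2; apply: H1; apply/IH.
- by split => -[H1 H2]; split; apply/(IHg F s) || apply/(IHh F s).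
- by split => H Ha; apply/IH; apply: H.
- split => H.
  + move=> v Hv; apply/IH; exact: H (sval v) (svalP v) Hv.
  + move=> G HG Hy; apply/(IH (exist _ G HG) s); exact: H (exist _ G HG) Hy.
Qed.

Definition imgset (A : finType) V (chi : V -> A) (F : V -> Prop) : {set A} :=
  [set a | `[< img chi F a >]].

Lemma facet_exists_aux (A : finType) (V : Type) (C : (V -> Prop) -> Prop) (chi : V -> A) :
  is_simplicial_model C chi ->
  forall n F, C F -> #|A| - #|imgset chi F| < n -> exists G, facet C G.
Proof.
move=> [_ _ _ _ Hinj]; elim=> [//|n IH] F CF Hn.
case: (classic (facet C F)) => [Hf|Hnf]; first by exists F.
have [G HG] : exists G, ~ (C G -> (forall v, F v -> G v) -> forall v, G v -> F v).
  by apply: not_all_ex_not => H; apply: Hnf; split.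
have [CG HG2] := imply_to_and _ _ HG.
have [FG HG3] := imply_to_and _ _ HG2.
have [v Hv] := not_all_ex_not _ _ HG3.
have [Gv nFv] := imply_to_and _ _ Hv.
have Hpr : imgset chi F \proper imgset chi G.
  apply/properP; split.
    apply/subsetP => a; rewrite !inE => /asboolP [u [Fu <-]].
    by apply/asboolP; exists u; split => //; apply: FG.
  exists (chi v); first by rewrite inE; apply/asboolP; exists v.
  rewrite inE; apply/negP => /asboolP [u [Fu Hu]].
  apply: nFv; have -> : v = u by apply: (Hinj G) => //; apply: FG.
  done.
have H2 := proper_card Hpr; have H1 : #|imgset chi G| <= #|A| := max_card _.
apply: (IH G CG); lia.
Qed.

Lemma part1 (A : finType) (X P : countType) (V : Type) (C : (V -> Prop) -> Prop)
  (chi : V -> A) (lab : P -> V -> Prop) :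
  is_simplicial_model C chi ->
     [/\ is_local_epistemic (@LEMdelta A V C chi) (@LEMR A V C chi) (@LEMrho A P V C chi lab),
         is_proper (@LEMdelta A V C chi) (@LEMR A V C chi) &
         forall (F : LEMW C) (alpha : form A X P), sentence alpha ->
           (ssat_sent C chi lab (sval F) alpha <->
            ksat_sent (@LEMdelta A V C chi) (@LEMR A V C chi) (@LEMrho A P V C chi lab) F alpha)].
Proof.
move=> Hs; have := Hs => -[[v0 _] Hne Hsub Hsing Hinj].
have Hincl : forall (F G : LEMW C), (forall a, @LEMdelta A V C chi F a -> @LEMR A V C chi a F G) ->
    forall v, sval F v -> sval G v.
  move=> F G H v Fv.
  have [u [[Fu Gu] Hu]] := H (chi v) (ex_intro _ v (conj Fv erefl)).
  have -> : v = u by apply: (Hinj (sval F)) => //; [exact: (proj1 (svalP F))].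
  done.
split.
- split.
  + split.
    * have [G HG] := facet_exists_aux Hs (n := (#|A| - #|imgset chi (fun u => u = v0)|).+1)
                       (Hsing v0) (ltnSn _).
      by exists (exist _ G HG).
    * move=> F; have [CF _] := svalP F; have [v Fv] := Hne _ CF; exists (chi v); by exists v.
    * by move=> a F G [u [[Fu _] Hu]]; exists u.
    * by move=> p F a [u [[Fu _] Hu]]; exists u.
  + move=> a; split.
    * by move=> F [u [Fu Hu]]; exists u.
    * by move=> F G _ _ [u [[Fu Gu] Hu]]; exists u.
    * move=> F G H _ _ _ [u [[Fu Gu] Hu]] [u' [[Gu' Hu'] Hu2]].
      have e : u = u' by apply: (Hinj (sval G)) => //; [exact: (proj1 (svalP G))|congruence].
      subst u'; by exists u.
  + by move=> a F G [u [[Fu Gu] Hu]] _; exists u.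
  + move=> a p F G [u [[Fu Gu] Hu]] [u' [[Fu' Lu'] Hu2]].
    have e : u = u' by apply: (Hinj (sval F)) => //; [exact: (proj1 (svalP F))|congruence].
    subst u'; by exists u.
  + move=> F G H a [u [Gu Hu]]; exists u; split => //.
    have FG := Hincl F G H.
    have [_ Hmax] := svalP F.
    exact: (Hmax (sval G) (proj1 (svalP G)) FG).
- move=> F G; split.
  + move=> H; apply: sig_eq; apply: funext => v; apply: propext.
    have FG := Hincl F G H.
    have [_ Hmax] := svalP F.
    split; [exact: (Hmax (sval G) (proj1 (svalP G)) FG)|exact: FG].
  + by move=> -> a [u [Fu Hu]]; exists u.
- move=> F alpha _; split => H s; exact/truth1.
Qed.

Section P2.
Variables (A : finType) (X P : countType) (W : Type) (delta : W -> A -> Prop)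
  (R : A -> W -> W -> Prop) (rho : P -> W -> A -> Prop).
Local Notation SCf := (@SCfacet A W delta R).

Lemma Rimg : is_local_epistemic delta R rho -> forall a w v,
  R a w v <-> img (@SCchi A W delta R)
               (fun u => SCf w u /\ SCf v u) a.
Proof.
move=> [[_ _ HRd _] Heq HRdd _ _] a w v; split.
- move=> Hwv; have dw := HRd _ _ _ Hwv; have dv := HRdd _ _ _ Hwv dw.
  have [Hr Hsy Htr] := Heq a.
  have eR : R a w = R a v.
    apply: funext => x; apply: propext; split => Hx.
    + have dx := HRdd _ _ _ Hx dw.
      exact: (Htr v w x dv dw dx (Hsy _ _ dw dv Hwv) Hx).
    + have dx := HRdd _ _ _ Hx dv.
      exact: (Htr w v x dw dv dx Hwv Hx).
  exists (exist _ (a, R a w) (ex_intro _ w (conj dw erefl))); rewrite /SCfacet /=.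
  by split.
- move=> [[[b S] pf] [[[dw e1] [dv e2]] Hb]]; rewrite /SCchi /= in Hb dw e1 dv e2; subst b.
  have [Hr _ _] := Heq a.
  by rewrite e1 in e2; rewrite e2; apply: Hr.
Qed.

Lemma SCfacet_sub : is_local_epistemic delta R rho -> forall w v,
  (forall u, SCf w u -> SCf v u) -> forall u, SCf v u -> SCf w u.
Proof.
move=> [[_ _ HRd _] Heq HRdd _ H5] w v H.
have Ha : forall a, delta w a -> delta v a /\ R a w = R a v.
  move=> a dw.
  have := H (exist _ (a, R a w) (ex_intro _ w (conj dw erefl))).
  by rewrite /SCfacet /= => /(_ (conj dw erefl)).
have Hwv : forall a, delta w a -> R a w v.
  move=> a dw; have [dv ->] := Ha a dw; have [Hr _ _] := Heq a; exact: Hr.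
move=> [[b S] pf]; rewrite /SCfacet /= => -[dv ->].
have dw := H5 w v Hwv b dv.
by split => //; case: (Ha b dw).
Qed.

Lemma SCfacet_ne : is_local_epistemic delta R rho -> forall w, exists u, SCf w u.
Proof.
move=> [[_ Hne _ _] _ _ _ _] w; have [a dw] := Hne w.
by exists (exist _ (a, R a w) (ex_intro _ w (conj dw erefl))).
Qed.

Lemma SCfacet_char : is_local_epistemic delta R rho -> forall G,
  facet (@SCC A W delta R) G <-> exists w, forall u, G u <-> SCf w u.
Proof.
move=> HL G; split.
- move=> [[Gne [w Hw]] Hmax]; exists w => u; split; first exact: Hw.
  apply: Hmax => //; split; [exact: SCfacet_ne|by exists w].
- move=> [w Hw]; split.
  + have [u Hu] := SCfacet_ne HL w; split; first by exists u; apply/Hw.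
    by exists w => u0 /Hw.
  + move=> H [_ [v Hv]] GH u Hu; apply/Hw.
    apply: (SCfacet_sub HL (w := w) (v := v)) => //.
    by move=> u0 /Hw /GH /Hv.
    by apply: Hv.
Qed.

Lemma truth2 : is_local_epistemic delta R rho -> forall (f : form A X P) w s,
  ksat delta R rho w s f <->
  ssat (@SCC A W delta R) (@SCchi A W delta R) (@SClab A P W delta R rho)
       (@SCfacet A W delta R w) s f.
Proof.
move=> HL; have := HL => -[[_ _ HRd Hrd] Heq HRdd Hrho _].
elim=> [p x|| g IH | g IHg h IHh | x a g IH | xs g IH] w s /=.
- split.
  + move=> Hr; have dw := Hrd _ _ _ Hr.
    exists (exist _ (s x, R (s x) w) (ex_intro _ w (conj dw erefl))).
    by rewrite /SCfacet /SClab /=; split => //; split => //; exists w.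
  + move=> [[[b S] pf] [[[dw e1] [w' [dw' [e2 Hr]]]] Hb]]; rewrite /SCchi /= in Hb dw e1 dw' e2 Hr; subst b; rewrite e1 in e2.
    have [Hr0 Hsy _] := Heq (s x).
    have Hww' : R (s x) w w' by rewrite e2; apply: Hr0.
    exact: (Hrho _ _ _ _ (Hsy _ _ dw dw' Hww') Hr).
- by [].
- by split => H1 H2; apply: H1; apply/IH.
- by split => -[H1 H2]; split; apply/(IHg w s) || apply/(IHh w s).
- split => H Ha; apply/IH; apply: H.
  + by move: Ha => [[[b S] pf] [[/= dw _] <-]].
  + by exists (exist _ (a, R a w) (ex_intro _ w (conj Ha erefl))).
- split => H.
  + move=> G HG Hy; have [v Hv] := (SCfacet_char HL G).1 HG.
    have -> : G = SCf v by apply: funext => u; apply: propext.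
    apply/IH; apply: H => y /Hy.
    have -> : G = SCf v by apply: funext => u; apply: propext.
    by move/(Rimg HL).
  + move=> v Hv; apply/IH; apply: H.
      by apply/(SCfacet_char HL); exists v.
    by move=> y /Hv /(Rimg HL).
Qed.

Lemma part2 : is_local_epistemic delta R rho ->
     [/\ is_simplicial_model (@SCC A W delta R) (@SCchi A W delta R),
         (forall G, facet (@SCC A W delta R) G <->
                    exists w, forall u, G u <-> @SCfacet A W delta R w u) &
         forall (w : W) (alpha : form A X P), sentence alpha ->
           (ksat_sent delta R rho w alpha <->
            ssat_sent (@SCC A W delta R) (@SCchi A W delta R) (@SClab A P W delta R rho)
                      (@SCfacet A W delta R w) alpha)].
Proof.
move=> HL; split.
- have := HL => -[[[w0 _] _ _ _] _ _ _ _]; split.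
  + by have [u _] := SCfacet_ne HL w0; exists u.
  + by move=> F [].
  + move=> F G [_ [w Hw]] GF Gne; split => //; exists w => u /GF /Hw //.
  + move=> v; split; first by exists v.
    case: v => [[b S] [w [dw e]]]; exists w => u -> //.
  + move=> F u v [_ [w Hw]] Fu Fv; rewrite /SCchi => e.
    have [du eu] := Hw u Fu; have [dv ev] := Hw v Fv.
    apply: sig_eq; move: e eu ev; case: (sval u) => a1 S1; case: (sval v) => a2 S2 /= -> -> -> //.
- exact: SCfacet_char.
- move=> w alpha _; split => H s; exact/(truth2 HL).
Qed.
End P2.

Theorem proposition2 (A : finType) (X : countType) (P : countType)
  (HA : 0 < #|A|) :
  (forall (V : Type) (C : (V -> Prop) -> Prop) (chi : V -> A) (lab : P -> V -> Prop),
     is_simplicial_model C chi ->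
     [/\ is_local_epistemic (@LEMdelta A V C chi) (@LEMR A V C chi) (@LEMrho A P V C chi lab),
         is_proper (@LEMdelta A V C chi) (@LEMR A V C chi) &
         forall (F : LEMW C) (alpha : form A X P), sentence alpha ->
           (ssat_sent C chi lab (sval F) alpha <->
            ksat_sent (@LEMdelta A V C chi) (@LEMR A V C chi) (@LEMrho A P V C chi lab) F alpha)])
  /\
  (forall (W : Type) (delta : W -> A -> Prop) (R : A -> W -> W -> Prop)
          (rho : P -> W -> A -> Prop),
     is_local_epistemic delta R rho ->
     [/\ is_simplicial_model (@SCC A W delta R) (@SCchi A W delta R),
         (forall G, facet (@SCC A W delta R) G <->
                    exists w, forall u, G u <-> @SCfacet A W delta R w u) &
         forall (w : W) (alpha : form A X P), sentence alpha ->
           (ksat_sent delta R rho w alpha <->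
            ssat_sent (@SCC A W delta R) (@SCchi A W delta R) (@SClab A P W delta R rho)
                      (@SCfacet A W delta R w) alpha)]).
Proof.
split.
- move=> V C chi lab; exact: part1.
- move=> W delta R rho; exact: part2.
Qed.
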